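(* Let $\mathcal{A}$ be a complex unital Banach algebra, let $p,q\in\mathcal{A}$ be idempotents and $m\in\mathbb{N}$. Then $$p+q-pq+\sum_{k=2}^{m}\big((pq)^{k-1}p-(pq)^k\big)$$ is Drazin invertible (respectively, g-Drazin invertible) if and only if $1-(pq)^m$ is Drazin invertible (respectively, g-Drazin invertible).
   Context: $\mathcal{A}$ is a complex unital Banach algebra with unit $1$; an idempotent is an element $e$ with $e^2=e$. An element $a$ is Drazin invertible if there exists $b\in\mathcal{A}$ with $ab=ba$, $bab=b$, and $(a(1-ab))^n=0$ for some $n\in\mathbb{N}$; g-Drazin invertible if there exists $b$ with $ab=ba$, $bab=b$, and $a(1-ab)$ quasinilpotent (spectral radius $0$). The empty sum (for $m=1$) is $0$. *)

(* Defs.v *)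
From mathcomp Require Import all_boot all_order all_algebra.
From mathcomp Require Import complex.
From mathcomp Require Import reals.

Set Implicit Arguments.
Unset Strict Implicit.
Unset Printing Implicit Defensive.

Import Order.TTheory GRing.Theory Num.Theory.
Local Open Scope ring_scope.
Local Open Scope complex_scope.

Section BanachAlgebra.
Variables (R : realType).
Variable (A : unitAlgType R[i]).

Definition banach_algebra_norm (nrm : A -> R) : Prop :=
  [/\ forall x : A, 0 <= nrm x,
      forall x : A, nrm x = 0 -> x = 0,
      forall x y : A, nrm (x + y) <= nrm x + nrm y &
      forall (c : R[i]) (x : A), (nrm (c *: x))%:C = `|c| * (nrm x)%:C] /\
  [/\ forall x y : A, nrm (x * y) <= nrm x * nrm y,
      nrm 1 = 1 &
      forall u : nat -> A,
        (forall e : R, 0 < e -> exists N : nat, forall n k : nat,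
            (N <= n)%N -> (N <= k)%N -> nrm (u n - u k) < e) ->
        exists l : A, forall e : R, 0 < e -> exists N : nat, forall n : nat,
            (N <= n)%N -> nrm (u n - l) < e].

Definition drazin_invertible (a : A) : Prop :=
  exists b : A, [/\ a * b = b * a, b * a * b = b &
                    exists n : nat, (a * (1 - a * b)) ^+ n = 0].

(* a is quasinilpotent (spectral radius 0): its spectrum is contained
   in {0}, i.e. lambda 1 - a is invertible for every complex lambda <> 0. *)
Definition quasinilpotent (a : A) : Prop :=
  forall lambda : R[i], lambda != 0 -> (lambda%:A - a) \is a GRing.unit.

Definition gdrazin_invertible (a : A) : Prop :=
  exists b : A, [/\ a * b = b * a, b * a * b = b &
                    quasinilpotent (a * (1 - a * b))].
End BanachAlgebra.

(* Main.v *)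
Require Import Defs.
From mathcomp Require Import all_boot all_order all_algebra.
From mathcomp Require Import complex.
From mathcomp Require Import reals.
Import Order.TTheory GRing.Theory Num.Theory.
Local Open Scope ring_scope.
Local Open Scope complex_scope.
Ltac nrm := repeat progress rewrite ?mulrDl ?mulrDr ?mulrBl ?mulrBr ?mulrA ?mul1r ?mulr1 ?mulr0 ?mul0r ?mulNr ?mulrN ?opprK.

Lemma JU {R : realType} {A : unitAlgType R[i]} (L X Y : A) : (forall z, L*z = z*L) -> L \is a GRing.unit ->
  (L - X*Y) \is a GRing.unit -> (L - Y*X) \is a GRing.unit.
Proof.
move=> cL uL uv; set v := (L - X*Y)^-1.
have cLi : forall z, L^-1 * z = z * L^-1.
  by move=> z; apply/esym/commrV; rewrite /GRing.comm cL.
have e1 : (L - Y*X) * (Y*v*X) = Y*X.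
  have h : Y * ((L - X*Y) * v) * X = Y*X by rewrite mulrV // mulr1.
  apply: (etrans _ h); nrm; by rewrite cL.
have e2 : (Y*v*X) * (L - Y*X) = Y*X.
  have h : Y * (v * (L - X*Y)) * X = Y*X by rewrite mulVr // mulr1.
  apply: (etrans _ h); nrm; by rewrite -!(mulrA _ _ L) -cL !mulrA.
apply/unitrP; exists ((1 + Y*v*X) * L^-1); split.
  by rewrite -cLi -mulrA mulrDl mul1r e2 subrK mulVr.
by rewrite mulrA mulrDr mulr1 e1 subrK mulrV.
Qed.

Definition gdr {R : realType} {A : unitAlgType R[i]} (Q : A -> Prop) (a : A) :=
  exists b : A, [/\ a*b = b*a, b*a*b = b & Q (a*(1-a*b))].

Definition QH {R : realType} {A : unitAlgType R[i]} (Q : A -> Prop) :=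
  (forall N, Q N -> forall l : R[i], l != 0 -> (l%:A - N) \is a GRing.unit) /\
  (forall X Y, Q (X*Y) -> Q (Y*X)).

Lemma unit1B {R : realType} {A : unitAlgType R[i]} (Q : A -> Prop) : QH Q -> forall N, Q N -> (1 - N) \is a GRing.unit.
Proof. by move=> [H _] N /H /(_ 1 (oner_neq0 _)); rewrite scale1r. Qed.

Lemma unit1D {R : realType} {A : unitAlgType R[i]} (Q : A -> Prop) : QH Q -> forall N, Q N -> (1 + N) \is a GRing.unit.
Proof.
move=> [H _] N /H /(_ (-1)); rewrite oppr_eq0 oner_neq0 scaleN1r => /(_ isT).
by rewrite -opprD unitrN.
Qed.

Lemma QP_of {R : realType} {A : unitAlgType R[i]} (Q : A -> Prop) : QH Q -> forall a, gdr Q a ->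
  exists pi, [/\ pi*pi = pi, pi*a = a*pi, (a+pi) \is a GRing.unit & Q (a*pi)].
Proof.
move=> HQ a [b [h1 h2 hQ]]; exists (1 - a*b).
have abab : a*b*a*b = a*b by rewrite -!mulrA [b*(a*b)]mulrA h2.
have abb : a*b*b = b by rewrite h1 h2.
have bab' : b*(a*b) = b by rewrite mulrA h2.
set pi := 1 - a*b in hQ *.
have pp : pi*pi = pi by rewrite /pi; nrm; rewrite abab addNr addr0.
have pa : pi*a = a*pi by rewrite /pi; nrm; rewrite -(mulrA a b a) -h1 mulrA.
have pb : pi*b = 0 by rewrite /pi; nrm; rewrite abb subrr.
have bp : b*pi = 0 by rewrite /pi; nrm; rewrite h2 subrr.
have ab1 : a*b = 1 - pi by rewrite /pi opprB addrC subrK.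
clearbody pi.
have e1 : (a+pi)*(b+pi) = 1 + a*pi.
  by rewrite mulrDl !mulrDr pb pp ab1 add0r addrAC subrK.
have e2 : (b+pi)*(a+pi) = 1 + a*pi.
  by rewrite mulrDl !mulrDr bp pp -h1 ab1 pa addr0 addrA addrAC subrK.
have u1 : (1 + a*pi) \is a GRing.unit by exact: (@unit1D _ _ Q HQ _ hQ).
have cap : GRing.comm a pi by rewrite /GRing.comm pa.
have c1 : GRing.comm (a+pi) (1 + a*pi).
  apply: commrD; first exact: commr1.
  apply: commrM; apply/commr_sym; apply: commrD.
  1-4: by rewrite /GRing.comm ?pa.
split => //; apply/unitrP; exists ((b+pi)*(1 + a*pi)^-1); split.
  by rewrite -mulrA -(commrV c1) mulrA e2 mulrV.
by rewrite mulrA e1 mulrV.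
Qed.

Lemma of_QP {R : realType} {A : unitAlgType R[i]} Q (a pi : A) : pi*pi = pi -> pi*a = a*pi -> (a+pi) \is a GRing.unit ->
  Q (a*pi) -> gdr Q a.
Proof.
move=> pp pa ua hQ; set v := (a+pi)^-1.
have cva : a*v = v*a by apply: commrV; rewrite /GRing.comm mulrDl mulrDr pa.
have cvp : pi*v = v*pi by apply: commrV; rewrite /GRing.comm mulrDl mulrDr pa.
have e : a*(1-pi) = (a+pi)*(1-pi). by rewrite mulrDl [pi*(1-pi)]mulrBr pp mulr1 addrN addr0.
have p1 : (1-pi)*(1-pi) = 1-pi by nrm; rewrite pp addNr addr0.
have pa' : (1-pi)*a = a*(1-pi) by rewrite mulrBl mulrBr mul1r mulr1 pa.
have c1v : (1-pi)*v = v*(1-pi) by rewrite mulrBl mulrBr mul1r mulr1 cvp.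
exists (v*(1-pi)).
have ab : a*(v*(1-pi)) = 1-pi by rewrite mulrA cva -mulrA e mulrA mulVr // mul1r.
have ba : v*(1-pi)*a = 1-pi by rewrite -mulrA pa' mulrA -cva -mulrA ab.
split.
- by rewrite ab ba.
- by rewrite ba mulrA c1v -mulrA p1.
- by rewrite ab opprB addrC subrK.
Qed.
Arguments unit1B {R A Q}.
Arguments unit1D {R A Q}.
Arguments QP_of {R A Q}.

Lemma Jac {R : realType} {A : unitAlgType R[i]} (Q : A -> Prop) : QH Q -> forall a c : A, gdr Q (1 - a*c) -> gdr Q (1 - c*a).
Proof.
move=> HQ a c /(QP_of HQ) [pi [pp pa upa Qn]].
set al := 1 - a*c in pa upa Qn.
have ac : a*c = 1 - al by rewrite /al subKr.
clearbody al.
set n := al*pi in Qn.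
have un : (1 - n) \is a GRing.unit := unit1B HQ _ Qn.
have pn : pi*n = n by rewrite /n mulrA pa -mulrA pp.
have np : n*pi = n by rewrite /n -mulrA pp.
have cpn : GRing.comm pi (1-n) by rewrite /GRing.comm mulrBl mulrBr mul1r mulr1 pn np.
have can : GRing.comm al (1-n) by rewrite /GRing.comm mulrBl mulrBr mul1r mulr1 /n -mulrA pa mulrA.
set w := (1-n)^-1.
have w2 : (1-n)*w = 1 := mulrV un.
have pw : pi*w = w*pi := commrV cpn.
have aw : al*w = w*al := commrV can.
clearbody w.
have K1 : (1-al)*pi = pi*(1-n) by rewrite mulrBl mulrBr mul1r mulr1 pn.
have cp1 : pi*(1-al) = (1-al)*pi by rewrite mulrBl mulrBr mul1r mulr1 pa.
have cw1 : w*(1-al) = (1-al)*w by rewrite mulrBl mulrBr mul1r mulr1 aw.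
have K2 : pi*w*(1-al) = pi by rewrite -mulrA cw1 mulrA cp1 K1 -mulrA w2 mulr1.
apply: (@of_QP _ _ Q _ (c*pi*w*a)).
- rewrite !mulrA -(mulrA _ a c) ac -(mulrA _ (1-al) pi) K1 mulrA.
  rewrite -(mulrA _ w pi) -pw mulrA -(mulrA _ pi pi) pp.
  by rewrite -(mulrA _ (1-n) w) w2 mulr1.
- rewrite mulrBr mulr1 mulrBl mul1r; congr (_ - _).
  rewrite !mulrA -(mulrA _ a c) ac -(mulrA c a c) ac.
  by rewrite -(mulrA _ w) cw1 mulrA -(mulrA c pi) cp1 mulrA.
- have -> : 1 - c*a + c*pi*w*a = 1 - c*((1 - pi*w)*a).
    by rewrite mulrBl mul1r mulrBr opprB addrA addrAC !mulrA.
  apply: (@JU _ _ 1 _ c (fun z => etrans (mul1r z) (esym (mulr1 z))) (unitr1 _)).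
  have -> : 1 - (1 - pi*w)*a*c = al + pi.
    by rewrite -mulrA ac mulrBl mul1r K2 opprB opprB addrCA [1 + _]addrC subrK addrC.
  done.
- have e : (1 - c*a)*c = c*al by rewrite mulrBl mul1r -mulrA ac mulrBr mulr1 subKr.
  rewrite !mulrA e -!mulrA; apply: (HQ.2).
  suff -> : al * (pi * (w * a)) * c = n by [].
  by rewrite -!mulrA ac cw1 (mulrA pi) cp1 K1 -mulrA w2 mulr1.
Qed.

Arguments of_QP {R A Q}.
Lemma Gcl {R : realType} {A : unitAlgType R[i]} (Q : A -> Prop) : QH Q -> forall f e t K : A, f*f = f -> e*e = e -> f*t = t -> t*e = t ->
  e*K = K -> K*f = K -> gdr Q ((1-f) + t*K) -> gdr Q ((1-e) + K*t).
Proof.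
move=> HQ f e t K pp PP pt tP PK Kp [d [h1 h2 hQ]].
set al := (1-f) + t*K in h1 h2 hQ.
have tK : t*K = al - (1-f) by rewrite /al addrAC subrr add0r.
have q1 : (1-f)*(1-f) = 1-f by nrm; rewrite pp addNr addr0.
have P1 : (1-e)*(1-e) = 1-e by nrm; rewrite PP addNr addr0.
have Kq : K*(1-f) = 0 by rewrite mulrBr mulr1 Kp subrr.
have qt : (1-f)*t = 0 by rewrite mulrBl mul1r pt subrr.
have Pq : (1-e)*K = 0 by rewrite mulrBl mul1r PK subrr.
have tP0 : t*(1-e) = 0 by rewrite mulrBr mulr1 tP subrr.
have PP0 : (1-e)*e = 0 by rewrite mulrBl mul1r PP subrr.
have qal : (1-f)*al = 1-f by rewrite /al mulrDr q1 mulrA qt mul0r addr0.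
have alq : al*(1-f) = 1-f by rewrite /al mulrDl q1 -mulrA Kq mulr0 addr0.
clearbody al.
set pi := 1 - al*d in hQ.
have ad : al*d = 1 - pi by rewrite /pi subKr.
have da : d*al = 1 - pi by rewrite -h1 ad.
have cpa : pi*al = al*pi.
  by rewrite /pi mulrBl mulrBr mul1r mulr1 -mulrA -h1 mulrA.
have ppi : pi*pi = pi.
  have t0 : al*d*al*d = al*d by rewrite -!mulrA [d*(al*d)]mulrA h2.
  by rewrite /pi; nrm; rewrite t0 addNr addr0.
clearbody pi.
set N := al*pi in hQ.
have un : (1 - N) \is a GRing.unit := unit1B HQ _ hQ.
have E : (1-f)*pi = 0.
  have e1 : (1-f)*pi*N = (1-f)*pi.
    by rewrite /N !mulrA -(mulrA _ pi al) cpa mulrA qal -mulrA ppi.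
  have e0 : (1-f)*pi*(1-N) = 0 by rewrite mulrBr mulr1 e1 subrr.
  have := congr1 (fun z => z * (1-N)^-1) e0.
  by rewrite /= (mulrK un) mul0r.
have F : pi*(1-f) = 0.
  have e1 : N*(pi*(1-f)) = pi*(1-f).
    by rewrite /N !mulrA -(mulrA al pi pi) ppi -cpa -mulrA alq.
  have e0 : (1-N)*(pi*(1-f)) = 0 by rewrite mulrBl mul1r e1 subrr.
  have := congr1 (fun z => (1-N)^-1 * z) e0.
  by rewrite /= (mulKr un) mulr0.
have dq : d*(1-f) = 1-f by rewrite -{1}alq mulrA da mulrBl mul1r F subr0.
have qd : (1-f)*d = 1-f by rewrite -{1}qal -mulrA ad mulrBr mulr1 E subr0.
exists ((1-e) + K*d*d*t).
have LB : ((1-e) + K*t)*((1-e) + K*d*d*t) = (1-e) + K*al*d*d*t.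
  rewrite [LHS]mulrDl [(1-e)*_]mulrDr [K*t*_]mulrDr P1 !mulrA Pq !mul0r addr0 -(mulrA K t (1-e)) tP0 mulr0 add0r.
  by rewrite -(mulrA K t K) tK mulrBr Kq subr0.
have LD : ((1-e) + K*d*d*t)*((1-e) + K*t) = (1-e) + K*d*d*al*t.
  rewrite [LHS]mulrDl [(1-e)*_]mulrDr [K*d*d*t*_]mulrDr P1 !mulrA Pq !mul0r addr0 -(mulrA _ t (1-e)) tP0 mulr0 add0r.
  by rewrite -(mulrA _ t K) tK mulrBr mulrBl -(mulrA _ (1-f) t) qt mulr0 subr0.
have cA : K*al*d*d*t = K*d*d*al*t.
  rewrite -(mulrA K al d) h1 mulrA -(mulrA (K*d) al d) h1 mulrA //.
have dd : d*d*al*al*d*d = d*d.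
  have k : forall z, z*d*al*d = z*d by move=> z; rewrite -!mulrA (mulrA d al d) h2.
  by rewrite -(mulrA (d*d*al) al d) h1 mulrA k k.
split.
- by rewrite LB LD cA.
- rewrite LD [LHS]mulrDl [(1-e)*_]mulrDr [K*d*d*al*t*_]mulrDr P1 !mulrA Pq !mul0r addr0 -(mulrA _ t (1-e)) tP0 mulr0 add0r.
  rewrite -(mulrA _ t K) tK; congr (_ + _).
  have ddz : forall z, z*d*d*al*al*d*d = z*d*d.
    by move=> z; have := congr1 (GRing.mul z) dd; rewrite !mulrA.
  rewrite mulrBr -(mulrA _ al (1-f)) alq !mulrBl ddz.
  rewrite -(mulrA _ (1-f) d) qd -(mulrA _ (1-f) d) qd -(mulrA _ (1-f) t) qt mulr0 subr0 //.
- rewrite LB.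
  have k : forall z, z*d*al*d = z*d by move=> z; rewrite -!mulrA (mulrA d al d) h2.
  have k2 : forall z, z*al*al*d*d = z*al*d.
    by move=> z; rewrite -(mulrA (z*al) al d) h1 mulrA k.
  have -> : ((1-e) + K*t)*(1 - ((1-e) + K*al*d*d*t)) = K*pi*t.
    rewrite opprD addrA subKr [LHS]mulrDl [(1-e)*_]mulrBr [K*t*_]mulrBr PP0 -(mulrA K t e) tP.
    rewrite !mulrA Pq !mul0r subrr add0r -(mulrA K t K) tK mulrBr Kq subr0 k2.
    by rewrite -(mulrA K al d) ad mulrBr mulr1 mulrBl subKr.
  apply: HQ.2; suff -> : t*(K*pi) = N by [].
  by rewrite mulrA tK mulrBl E subr0.
Qed.

Arguments Jac {R A Q}.
Arguments Gcl {R A Q}.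

Lemma main {R : realType} {A : unitAlgType R[i]} (Q : A -> Prop) : QH Q -> forall (p q : A) (m : nat), p* p = p -> q*q = q -> (1 <= m)%N ->
  let x := p + q - p*q + \sum_(2 <= k < m.+1) ((p*q)^+(k-1)* p - (p*q)^+k) in
  (gdr Q x <-> gdr Q (1 - (p*q)^+m)).
Proof.
move=> HQ p q m pp qq m1.
case: m m1 => // m _ x.
set a := p*q in x *.
set e := 1 - q.
have ee : e*e = e by rewrite /e; nrm; rewrite qq addNr addr0.
have eq0 : e*q = 0 by rewrite /e mulrBl mul1r qq subrr.
have pa1 : forall k, p*a^+k.+1 = a^+k.+1 by move=> k; rewrite exprS mulrA /a mulrA pp.
have pa : forall k, p*a^+k* p = a^+k* p.
  by case=> [|k]; [rewrite expr0 mulr1 pp mul1r | rewrite pa1].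
have I1 : x = q + \sum_(k < m.+1) a^+k * p * e.
  rewrite /x big_ord_recl /= expr0 mul1r /e mulrBr mulr1.
  rewrite (big_add1 _ _ 1) /= (big_add1 _ _ 0) /= big_mkord.
  rewrite -/a [p + q]addrC -!addrA; congr (q + (p + (- a + _))).
  apply: eq_bigr => i _; rewrite /bump /= subn1 /= mulrBr mulr1 -mulrA -/a -exprSr //.
have I2 : x*q = q.
  rewrite I1 mulrDl qq mulr_suml big1 ?addr0 // => i _.
  by rewrite -mulrA eq0 mulr0.
have I3 : 1 - (1-x)*e = x.
  by rewrite /e mulrBr mulr1 mulrBl mul1r I2 subrr subr0 subKr.
set K := \sum_(k < m.+1) e*a^+k* p.
set t := p*e.
have I4 : 1 - e*(1-x) = (1-e) + K*t.
  have ex : e*x = K*t.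
    rewrite I1 mulrDr eq0 add0r /K /t mulr_sumr mulr_suml; apply: eq_bigr => i _.
    by rewrite !mulrA -(mulrA _ p p) pp.
  by rewrite mulrBr mulr1 ex opprB addrA addrAC.
have I5 : (1-p) + t*K = 1 - a^+m.+1 * p.
  have sk : forall i, p*e*(e*a^+i * p) = a^+i * p - a^+i.+1 * p.
    move=> i; rewrite !mulrA -(mulrA p e e) ee /e mulrBr mulr1 !mulrBl pa -/a.
    by rewrite -exprS.
  have tele : forall (f : nat -> A) n, \sum_(i < n) (f i - f i.+1) = f 0%N - f n.
    move=> f; elim=> [|n IH]; first by rewrite big_ord0 subrr.
    by rewrite big_ord_recr /= IH subrKA.
  rewrite /t /K mulr_sumr; under eq_bigr => i _ do rewrite sk.
  by rewrite (tele (fun i => a^+i * p)) expr0 mul1r addrA subrK.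
have pt : p*t = t by rewrite /t mulrA pp.
have te : t*e = t by rewrite /t -mulrA ee.
have eK : e*K = K.
  by rewrite /K mulr_sumr; apply: eq_bigr => k _; rewrite !mulrA ee.
have Kp : K* p = K.
  by rewrite /K mulr_suml; apply: eq_bigr => k _; rewrite -mulrA pp.
have J1 : gdr Q (1 - a^+m.+1* p) <-> gdr Q (1 - a^+m.+1).
  rewrite -{2}(pa1 m); split; [exact: Jac | exact: Jac].
rewrite -J1 -I5 -{1}I3; split.
- move/(Jac HQ) => h; apply: (Gcl HQ e p K t ee pp eK Kp pt te); by rewrite -I4.
- move=> h; apply: (Jac HQ e (1-x)); rewrite I4.
  exact: (Gcl HQ p e t K pp ee pt te eK Kp).
Qed.

Lemma nilQH {R : realType} {A : unitAlgType R[i]} : QH (fun N : A => exists n, N ^+ n = 0).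
Proof.
split.
- move=> N [n hn] l l0.
  set x := l%:A.
  have cxN : GRing.comm x N by apply: comm_alg.
  have ux : x \is a GRing.unit by rewrite /x scaler_unit ?unitr1 // unitfE.
  have e := subrXX_comm n cxN.
  rewrite hn subr0 in e.
  set S := \sum_(i < n) _ in e.
  have cS : GRing.comm (x - N) S.
    apply: commr_sum => i _; apply: commrM; apply: commrX.
      by apply/commr_sym; apply: commrB => //; exact: commr_sym.
    apply/commr_sym; apply: commrB => //; exact: commr_sym.
  have : (x - N) * S \is a GRing.unit by rewrite -e unitrX.
  by rewrite unitrM_comm // => /andP[].
- move=> X Y [n hn]; exists n.+1.
  have h : forall k, (Y*X)^+k.+1 = Y*(X*Y)^+k*X.
    elim=> [|k IH]; first by rewrite expr1 expr0 mulr1.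
    by rewrite exprSr IH exprSr !mulrA.
  by rewrite h hn mulr0 mul0r.
Qed.

Lemma qnilQH {R : realType} {A : unitAlgType R[i]} : QH (@quasinilpotent R A).
Proof.
split; first by move=> N hN l l0; apply: hN.
move=> X Y hXY l l0; apply: JU.
- by move=> z; rewrite mulr_algl mulr_algr.
- by rewrite scaler_unit ?unitr1 // unitfE.
- exact: hXY.
Qed.

Lemma dr_eq {R : realType} {A : unitAlgType R[i]} (a : A) :
  drazin_invertible a = gdr (fun N : A => exists n, N ^+ n = 0) a.
Proof. by []. Qed.

Lemma gdr_eq {R : realType} {A : unitAlgType R[i]} (a : A) :
  gdrazin_invertible a = gdr (@quasinilpotent R A) a.
Proof. by []. Qed.

Theorem corollary3p2 (R : realType) (A : unitAlgType R[i]) (nrm : A -> R)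
    (hA : banach_algebra_norm nrm) (p q : A) (m : nat) :
  p * p = p -> q * q = q -> (1 <= m)%N ->
  let x := p + q - p * q
           + \sum_(2 <= k < m.+1) ((p * q) ^+ (k - 1) * p - (p * q) ^+ k) in
  (drazin_invertible x <-> drazin_invertible (1 - (p * q) ^+ m)) /\
  (gdrazin_invertible x <-> gdrazin_invertible (1 - (p * q) ^+ m)).
Proof.
move=> pp qq m1 x.
have h1 := main _ (@nilQH R A) p q m pp qq m1.
have h2 := main _ (@qnilQH R A) p q m pp qq m1.
rewrite !dr_eq !gdr_eq; split.
- exact: h1.
- exact: h2.
Qed.
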